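(* Let $G$ be a $2$-connected $\{P_k, K_m\}$-free graph of order $n\geq k$. If $G$ contains a strong dominating path $P$ such that $d(u)\geq \delta_k$ for every vertex $u\in V(G)\setminus V(P)$, then $G$ is a subgraph of $H \vee I_{n-\delta_k}$ if $k$ is even, and of $H \vee ( I_{n-\delta_k-2} \cup K_2)$ if $k$ is odd, for some $K_{m-1}$-free graph $H$ on $\delta_k$ vertices.
   Context: All graphs are finite and simple. $K_n$, $P_n$, $I_n$ denote the complete graph, the path, and the edgeless graph on $n$ vertices. For disjoint graphs $G,H$: $G\cup H$ is their disjoint union and $G\vee H$ is obtained from $G\cup H$ by adding all edges between $V(G)$ and $V(H)$. A graph is $\mathcal H$-free if it contains no member of $\mathcal H$ as a subgraph. $\delta_k=\lfloor k/2\rfloor-1$. A path $P$ in $G$ is a strong dominating path if $N(v)\subseteq V(P)$ for every $v\in V(G)\setminus V(P)$, where $N(v)$ is the neighbourhood of $v$ in $G$. *)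

(* Defs.v *)
From mathcomp Require Import all_boot.
Set Implicit Arguments. Unset Strict Implicit. Unset Printing Implicit Defensive.

Definition simple_graph (T : finType) (e : rel T) : Prop :=
  symmetric e /\ irreflexive e.

Definition subgraph (T1 T2 : finType) (e1 : rel T1) (e2 : rel T2) : Prop :=
  exists f : T1 -> T2, injective f /\ forall x y, e1 x y -> e2 (f x) (f y).

Definition path_graph (k : nat) : rel 'I_k :=
  fun i j => (i.+1 == j :> nat) || (j.+1 == i :> nat).
Definition complete_graph (m : nat) : rel 'I_m := fun i j => i != j.
Definition empty_graph (n : nat) : rel 'I_n := fun _ _ => false.

Definition gunion (A B : finType) (eA : rel A) (eB : rel B) : rel (A + B)%type :=
  fun x y => match x, y with
             | inl a, inl b => eA a b
             | inr a, inr b => eB a b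
             | _, _ => false end.
Definition gjoin (A B : finType) (eA : rel A) (eB : rel B) : rel (A + B)%type :=
  fun x y => match x, y with
             | inl a, inl b => eA a b
             | inr a, inr b => eB a b
             | _, _ => true end.

Definition P_free (k : nat) (T : finType) (e : rel T) : Prop :=
  ~ subgraph (@path_graph k) e.
Definition K_free (m : nat) (T : finType) (e : rel T) : Prop :=
  ~ subgraph (@complete_graph m) e.

Definition connected_graph (T : finType) (e : rel T) : Prop :=
  forall x y, connect e x y.

Definition two_connected (T : finType) (e : rel T) : Prop :=
  2 < #|T| /\ connected_graph e /\
  forall v x y, x != v -> y != v ->
    connect (fun a b => e a b && (a != v) && (b != v)) x y.

Definition deg (T : finType) (e : rel T) (v : T) : nat := #|[set u | e v u]|.

Definition is_gpath (T : finType) (e : rel T) (p : seq T) : bool :=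
  match p with
  | [::] => false
  | x :: s => uniq p && path e x s
  end.

Definition strong_dominating_path (T : finType) (e : rel T) (p : seq T) : Prop :=
  is_gpath e p /\ forall v, v \notin p -> forall u, e v u -> u \in p.

Definition delta (k : nat) : nat := k./2 - 1.

(* Main.v *)
Require Import Defs.
From mathcomp Require Import all_boot zify.
From Stdlib Require Import Classical.
Set Implicit Arguments. Unset Strict Implicit. Unset Printing Implicit Defensive.

Section Lists.
Variables (T : eqType) (e : rel T).
Hypothesis esym : symmetric e.



Lemma sorted_rev_sym s : sorted e (rev s) = sorted e s.
Proof.
rewrite rev_sorted; case: s => //= x s.
by apply: eq_path => a b; rewrite esym.
Qed.

Lemma path_rev_sym x B b : path e x (rev (rcons B b)) = e x b && sorted e (rcons B b).
Proof. by rewrite rev_rcons /= -(sorted_rev_sym (rcons B b)) rev_rcons. Qed.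

Lemma sorted_join A x B y C :
  sorted e (rcons A x) -> sorted e B -> B != [::] ->
  e x (last x B) -> e (head x B) y -> path e y C ->
  sorted e (A ++ x :: rev B ++ y :: C).
Proof.
move=> h1 h2 hB h3 h4 h5.
rewrite sorted_cat_cons h1 /= cat_path /=.
case/lastP: B hB h2 h3 h4 => // B b _ h2 h3 h4.
have lr : forall z (s : seq T), last z (rev s) = head z s.
  by move=> z [|a s] //=; rewrite rev_cons last_rcons.
by rewrite path_rev_sym lr h2 h4 h5 andbT; rewrite last_rcons in h3; rewrite h3.
Qed.
End Lists.

Section OnP.
Variables (T : eqType) (e : rel T) (x0 : T) (P : seq T).
Hypothesis Psort : sorted e P.
Local Notation t := (size P).
Local Notation q i := (nth x0 P i).

Definition sl a b := take (b - a) (drop a P).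

Lemma sl_sorted a b : sorted e (sl a b).
Proof. exact/take_sorted/drop_sorted. Qed.

Lemma size_sl a b : b <= t -> size (sl a b) = b - a.
Proof. move=> hb; rewrite size_take size_drop; case: ifP; lia. Qed.

Lemma sl_nth a b i z : i < b - a -> nth z (sl a b) i = nth z P (a + i).
Proof. by move=> hi; rewrite nth_take // nth_drop. Qed.

Lemma sl_nil a b : a < b <= t -> sl a b != [::].
Proof. move=> /andP[h1 h2]; rewrite -size_eq0 size_sl //; lia. Qed.

Lemma sl_head a b z : a < b <= t -> head z (sl a b) = q a.
Proof.
move=> /andP[h1 h2]; rewrite -nth0 sl_nth ?addn0; last lia.
by apply: set_nth_default; lia.
Qed.

Lemma sl_last a b z : a < b <= t -> last z (sl a b) = q b.-1.
Proof.
move=> /andP[h1 h2]; rewrite -nth_last size_sl // sl_nth; last lia.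
have -> : a + (b - a).-1 = b.-1 by lia.
by apply: set_nth_default; lia.
Qed.

Lemma take_sl a b : a <= b -> take b P = take a P ++ sl a b.
Proof. by move=> h; rewrite /sl -takeD; congr take; lia. Qed.

Lemma drop_sl a b : a <= b -> drop a P = sl a b ++ drop b P.
Proof. by move=> h; rewrite /sl -{1}(cat_take_drop (b - a) (drop a P)) drop_drop; congr (_ ++ drop _ _); lia. Qed.

Lemma sorted_rcons_take a y : a <= t -> (a = 0 \/ e (q a.-1) y) -> sorted e (rcons (take a P) y).
Proof.
move=> ha [->|h]; first by rewrite take0.
case: a ha h => [|a] ha h; first by rewrite take0.
rewrite (take_nth x0) //=.
have : sorted e (take a.+1 P) by exact: take_sorted.
rewrite (take_nth x0) //.
rewrite /= in h; case: (take a P) => [|z s] /=; first by rewrite h.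
by rewrite !rcons_path last_rcons => -> /=.
Qed.

Lemma path_drop b y : b <= t -> (b = t \/ e y (q b)) -> path e y (drop b P).
Proof.
move=> hb [->|h]; first by rewrite drop_size.
case: (ltnP b t) => hb'; last first.
  have hbt : b = t by lia.
  by rewrite hbt drop_size.
have := drop_sorted b Psort.
by rewrite (drop_nth x0) //= h.
Qed.
Lemma path_sl y a b : a < b <= t -> e y (q a) -> path e y (sl a b).
Proof.
move=> hab hy; have := sl_nil hab; have := sl_head y hab; have := sl_sorted a b.
by case: (sl a b) => //= z s hs hz _; subst z; rewrite hy.
Qed.
End OnP.

Definition Sw d j i := ((i %% 2 == 1) && (i < 2*j)) || ((i %% 2 == 0) && (2*j+2 <= i) && (i <= 2*d)).

Lemma count_iotaS (a : pred nat) n : count a (iota 0 n.+1) = count a (iota 0 n) + a n.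
Proof. by rewrite -addn1 iotaD count_cat /= addn0 add0n. Qed.

Lemma nocons_count (a : nat -> bool) n : a 0 = false ->
  (forall i, ~~ (a i && a i.+1)) -> count a (iota 0 n) <= n./2.
Proof.
move=> a0 nc; elim/ltn_ind: n => [[|n]] IH //.
rewrite count_iotaS.
case an: (a n); last by have := IH n (ltnSn n); rewrite addn0; lia.
case: n an IH => [|n] an IH; first by rewrite a0 in an.
rewrite count_iotaS.
have : a n = false by have := nc n; rewrite an andbT; case: (a n).
move=> ->; have := IH n (ltnW (ltnSn _)); simpl; lia.
Qed.

Lemma pairs_count (a : pred nat) d : count a (iota 0 (2*d).+1) =
  a 0 + count (fun g => a (2*g+1)) (iota 0 d) + count (fun g => a (2*g+2)) (iota 0 d).
Proof.
elim: d => [|d IH]; first by rewrite /= !addn0.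
have -> : (2 * d.+1).+1 = (2*d).+1 + 2 by lia.
rewrite iotaD count_cat IH !count_iotaS /= add0n addn0.
have -> : (2*d).+1 = 2*d+1 by lia.
have -> : (2*d+1).+1 = 2*d+2 by lia.
lia.
Qed.

Lemma exactly_one (p p' : pred nat) d : d <= count p (iota 0 d) + count p' (iota 0 d) ->
  (forall g, g < d -> ~~ (p g && p' g)) -> forall g, g < d -> p g || p' g.
Proof.
move=> hc hd.
have h0 : count (predI p p') (iota 0 d) = 0.
  apply/eqP; rewrite -leqn0 leqNgt -has_count; apply/hasP => -[g].
  by rewrite mem_iota add0n /= => /hd /negPf ->.
have hU := count_predUI p p' (iota 0 d); rewrite h0 addn0 in hU.
have hs := count_size (predU p p') (iota 0 d); rewrite size_iota in hs.
have : all (predU p p') (iota 0 d) by rewrite all_count size_iota; apply/eqP; lia.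
by move/allP => hA g hg; apply: hA; rewrite mem_iota.
Qed.

Lemma Sw_odd d j g : g < d -> j <= d -> Sw d j (2*g+1) = (g < j).
Proof. by move=> *; rewrite /Sw; apply/idP/idP; lia. Qed.
Lemma Sw_even d j g : g < d -> j <= d -> Sw d j (2*g+2) = (j <= g).
Proof. by move=> *; rewrite /Sw; apply/idP/idP; lia. Qed.

Lemma switch d t (a : nat -> bool) : (t = (2*d).+1 \/ t = (2*d).+2) -> a 0 = false -> a t.-1 = false ->
  (forall i, i.+1 < t -> ~~ (a i && a i.+1)) -> d <= count a (iota 0 t) ->
  exists j, [/\ j <= d, (t = (2*d).+1 -> j = d) & forall i, i < t -> a i = Sw d j i].
Proof.
move=> ht a0 at1 nc hc.
have hc' : d <= count a (iota 0 (2*d).+1).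
  case: ht => ht; first by rewrite -ht.
  move: hc at1; rewrite ht count_iotaS /= => hc at1; by rewrite at1 addn0 in hc.
rewrite pairs_count a0 add0n in hc'.
have one : forall g, g < d -> a (2*g+1) || a (2*g+2).
  apply: (exactly_one (p := fun g => a (2*g+1)) (p' := fun g => a (2*g+2)) hc') => g hg /=.
  have -> : 2*g+2 = (2*g+1).+1 by lia.
  apply: nc; case: ht; lia.
have notboth : forall g, g < d -> ~~ (a (2*g+1) && a (2*g+2)).
  move=> g hg; have -> : 2*g+2 = (2*g+1).+1 by lia.
  apply: nc; case: ht; lia.
have prop : forall g h, g + h < d -> a (2*g+2) -> a (2*(g+h)+2).
  move=> g h; elim: h => [|h IH] hgh ag; first by rewrite addn0.
  have := IH ltac:(lia) ag => ah.
  have := nc (2*(g+h)+2) ltac:(case: ht; lia).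
  rewrite ah /= => /negPf ah3.
  have := one (g+h.+1) hgh.
  have -> : 2 * (g + h.+1) + 1 = (2 * (g + h) + 2).+1 by lia.
  by rewrite ah3.
suff [j [hj hj1 hodd]] : exists j, [/\ j <= d, (t = (2*d).+1 -> j = d) &
    forall g, g < d -> a (2*g+1) = (g < j) /\ a (2*g+2) = (j <= g)].
  exists j; split => // i hi.
  case: (posnP i) => [->|ip]; first by rewrite a0 /Sw; apply/esym/idP; lia.
  case: (ltnP ((i.-1)./2) d) => hg.
    have [hi1|hi2] : i = 2*(i.-1)./2+1 \/ i = 2*(i.-1)./2+2 by lia.
    - by rewrite [in LHS]hi1 [in RHS]hi1 Sw_odd //; case: (hodd _ hg).
    - by rewrite [in LHS]hi2 [in RHS]hi2 Sw_even //; case: (hodd _ hg).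
  have hit : i = t.-1 by case: ht; lia.
  rewrite hit at1 /Sw; apply/esym/idP; case: ht hit => ht; first lia.
  have := hj1; rewrite ht; lia.
case: ht => ht.
  exists d; split => // g hg.
  have nA : ~~ a (2*g+2).
    apply/negP => ag; have := prop g (d - g).-1 ltac:(lia) ag.
    have -> : 2 * (g + (d - g).-1) + 2 = t.-1 by lia.
    by rewrite at1.
  have := one g hg; rewrite (negPf nA) orbF => ->; split => //; apply/esym/negbTE; lia.
set j := find (fun g => a (2*g+2)) (iota 0 d).
have hj : j <= d by rewrite -[X in _ <= X](size_iota 0 d) find_size.
exists j; split => //; first by lia.
move=> g hg.
case: (ltnP g j) => hgj.
  have := before_find 0 hgj; rewrite nth_iota; last lia.
  rewrite add0n => na; split => //.
  by have := one g hg; rewrite na orbF.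
have hjd : j < d by lia.
have aj : a (2*j+2).
  have := nth_find 0 (a := fun g => a (2*g+2)) (s := iota 0 d).
  rewrite -/j nth_iota // add0n; apply; rewrite has_find size_iota //.
have := prop j (g - j) ltac:(lia) aj.
have -> : j + (g - j) = g by lia.
move=> ag; split => //.
by have := notboth g hg; rewrite ag andbT => /negbTE.
Qed.
Lemma edge_arith d j t a b : (t = (2*d).+1 /\ j = d \/ t = (2*d).+2) -> j <= d -> a < b -> b < t ->
  ~~ Sw d j a -> ~~ Sw d j b -> ~ (a = 2*j /\ b = (2*j).+1) ->
  (Sw d j a.+1 /\ (b.+1 = t \/ Sw d j b.+1)) \/ ((a = 0 \/ Sw d j a.-1) /\ Sw d j b.-1).
Proof.
rewrite /Sw !modn2.
case: b => [|b]; first by lia.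
have hb : b = 2*(b %/ 2) + odd b by rewrite -modn2 mulnC -divn_eq.
move: (b %/ 2) hb => y hb.
case: a => [|a].
  rewrite /=; case: (odd b) hb => /= hb; lia.
have ha : a = 2*(a %/ 2) + odd a by rewrite -modn2 mulnC -divn_eq.
move: (a %/ 2) ha => x ha.
rewrite /=.
case: (odd a) ha => /= ha; case: (odd b) hb => /= hb; lia.
Qed.

Lemma Sw_2j d j : ~~ Sw d j (2*j).
Proof. rewrite /Sw; apply/negP; lia. Qed.
Lemma Sw_2j1 d j : ~~ Sw d j (2*j).+1.
Proof. rewrite /Sw; apply/negP; lia. Qed.

Section Main.
Variables (T : finType) (e : rel T).
Hypotheses (esym : symmetric e) (eirr : irreflexive e).
Variables (k d : nat) (P : seq T) (x0 : T).
Hypotheses (Pu : uniq P) (Ps : sorted e P) (Pn : P != [::]).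
Hypothesis Pmax : forall L, uniq L -> sorted e L -> {subset P <= L} -> size L <= size P.
Hypothesis Pk : forall L, uniq L -> sorted e L -> size L < k.
Hypothesis Rdom : forall v, v \notin P -> forall u, e v u -> u \in P.
Hypothesis Rdeg : forall v, v \notin P -> d <= deg e v.
Hypothesis mindeg : forall v, 1 < deg e v.
Hypothesis hk : k = (2*d).+2 \/ k = (2*d).+3.

Local Notation t := (size P).
Local Notation q i := (nth x0 P i).
Local Notation sl := (sl P).

Lemma grow L : uniq L -> sorted e L -> {subset P <= L} -> t < size L -> False.
Proof. by move=> u s sub lt; have := Pmax u s sub; lia. Qed.

Lemma grow1 L r : r \notin P -> perm_eq L (r :: P) -> sorted e L -> False.
Proof.
move=> rP hp hs; apply: (grow _ hs).
- by rewrite (perm_uniq hp) /= rP Pu.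
- by move=> z zP; rewrite (perm_mem hp) inE zP orbT.
- by rewrite (perm_size hp).
Qed.

Lemma grow2 L r r' : r \notin P -> r' \notin P -> r != r' -> perm_eq L (r :: r' :: P) -> sorted e L -> False.
Proof.
move=> rP r'P rr hp hs; apply: (grow _ hs).
- by rewrite (perm_uniq hp) /= !inE negb_or rr rP r'P Pu.
- by move=> z zP; rewrite (perm_mem hp) !inE zP !orbT.
- by rewrite (perm_size hp) /=.
Qed.

Lemma kcontra L r r' M N : r \notin P -> r' \notin P -> r != r' ->
  perm_eq L (r :: r' :: M) -> perm_eq P (M ++ N) -> sorted e L -> k <= size L -> False.
Proof.
move=> rP r'P rr hp hPM hs hsz.
have uM : uniq M by have := Pu; rewrite (perm_uniq hPM) cat_uniq => /andP[].
have sub : forall z, z \in M -> z \in P by move=> z zM; rewrite (perm_mem hPM) mem_cat zM.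
have uL : uniq L.
  rewrite (perm_uniq hp) /= uM !inE negb_or rr /= andbT.
  by apply/andP; split; apply/negP => /sub; apply/negP.
by have := Pk uL hs; lia.
Qed.

Lemma insert_contra r i : r \notin P -> i <= t -> (i = 0 \/ e r (q i.-1)) -> (i = t \/ e r (q i)) -> False.
Proof.
move=> rP hi h1 h2.
apply: (grow1 (L := take i P ++ r :: drop i P) rP).
  rewrite -[X in perm_eq _ (_ :: X)](cat_take_drop i P).
  apply/permP => z; rewrite /= !count_cat /=; lia.
rewrite sorted_cat_cons (sorted_rcons_take (x0:=x0) Ps) //; last by case: h1; [left | right; rewrite esym].
exact: (path_drop (x0:=x0) Ps).
Qed.

Lemma deg_count r : r \notin P -> deg e r = count (fun i => e r (q i)) (iota 0 t).
Proof.
move=> rP.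
have -> : count (fun i => e r (q i)) (iota 0 t) = count (e r) P.
  by rewrite -{3}(mkseq_nth x0 P) /mkseq count_map.
rewrite /deg -size_filter -(card_uniqP _); last exact: filter_uniq.
apply: eq_card => u; rewrite inE mem_filter.
by case h: (e r u) => //=; rewrite (Rdom rP h).
Qed.

Lemma tpos : 0 < t.
Proof. by case: (P) Pn. Qed.

Lemma a_facts r : r \notin P ->
  [/\ e r (q 0) = false, e r (q t.-1) = false &
      forall i, i.+1 < t -> ~~ (e r (q i) && e r (q i.+1))].
Proof.
move=> rP; have tp := tpos; split.
- apply/negP => h; apply: (insert_contra (i := 0) rP) => //; [by left | by right].
- apply/negP => h; apply: (insert_contra (i := t) rP) => //; [by right | by left].
- move=> i hi; apply/negP => /andP[h1 h2]; apply: (insert_contra (i := i.+1) rP) => //; [exact: ltnW | by right | by right].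
Qed.

Lemma count_bound r : r \notin P -> count (fun i => e r (q i)) (iota 0 t) <= (t.-1)./2.
Proof.
move=> rP; have [f0 f1 fc] := a_facts rP; have tp := tpos.
set a := fun i => e r (q i).
set a' := fun i => (i.+1 < t) && a i.
have -> : count a (iota 0 t) = count a' (iota 0 t).
  apply: eq_in_count => i; rewrite mem_iota add0n => hi.
  rewrite /a'; case: (ltnP i.+1 t) => // hi'.
  by have -> : i = t.-1 by lia.
have -> : t = t.-1.+1 by lia.
rewrite count_iotaS.
have -> : a' t.-1 = false by rewrite /a'; apply/negP; lia.
rewrite addn0; apply: nocons_count.
  by rewrite /a'; case: (ltnP 1 t) => //= _; rewrite /a f0.
move=> i; rewrite /a'; apply/negP => /andP[/andP[h1 h2] /andP[h3 h4]].
by have := fc i h1; rewrite /a in h2 h4; rewrite h2 h4.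
Qed.

Lemma sw_spec r : r \notin P -> (t = (2*d).+1 \/ t = (2*d).+2) ->
  exists j, [/\ j <= d, (t = (2*d).+1 -> j = d) & forall i, i < t -> e r (q i) = Sw d j i].
Proof.
move=> rP ht; have [f0 f1 fc] := a_facts rP.
apply: (switch (a := fun i => e r (q i))) => //.
by rewrite -deg_count //; apply: Rdeg.
Qed.

Lemma edgeR r a b : r \notin P -> a < b -> b < t -> e (q a) (q b) -> e r (q a.+1) ->
  (b.+1 = t \/ e r (q b.+1)) -> False.
Proof.
move=> rP hab hbt eab h1 h2.
have hP : P = take a P ++ q a :: sl a.+1 b.+1 ++ drop b.+1 P.
  rewrite -(drop_sl Ps (a := a.+1) (b := b.+1)); last lia.
  by rewrite -{1}(cat_take_drop a P) (drop_nth x0 (n := a)) //; lia.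
apply: (grow1 (L := take a P ++ q a :: rev (sl a.+1 b.+1) ++ r :: drop b.+1 P) rP).
  rewrite [X in perm_eq _ (_ :: X)]hP.
  apply/permP => z; rewrite /= !count_cat /= !count_cat /= count_rev; lia.
have hsl : a.+1 < b.+1 <= t by lia.
apply: (sorted_join esym).
- by rewrite -(take_nth x0); [exact: take_sorted | lia].
- exact: sl_sorted.
- exact: (sl_nil Ps hsl).
- by rewrite (sl_last x0 Ps _ hsl).
- by rewrite (sl_head x0 Ps _ hsl) esym.
- by apply: (path_drop (x0 := x0) Ps) => //; lia.
Qed.

Lemma edgeL r a b : r \notin P -> a < b -> b < t -> e (q a) (q b) ->
  (a = 0 \/ e r (q a.-1)) -> e r (q b.-1) -> False.
Proof.
move=> rP hab hbt eab h1 h2.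
have hP : P = take a P ++ sl a b ++ q b :: drop b.+1 P.
  rewrite -(drop_nth x0 (n := b)) // -(drop_sl Ps (a := a) (b := b)) ?cat_take_drop //; lia.
apply: (grow1 (L := take a P ++ r :: rev (sl a b) ++ q b :: drop b.+1 P) rP).
  rewrite [X in perm_eq _ (_ :: X)]hP.
  apply/permP => z; rewrite /= !count_cat /= !count_cat /= count_rev; lia.
have hsl : a < b <= t by lia.
apply: (sorted_join esym).
- apply: (sorted_rcons_take (x0 := x0) Ps (a := a) (y := r)); first exact: ltnW (ltn_trans hab hbt).
  by case: h1; [left | right; rewrite esym].
- exact: sl_sorted.
- exact: (sl_nil Ps hsl).
- by rewrite (sl_last x0 Ps _ hsl).
- by rewrite (sl_head x0 Ps _ hsl).
- by have := drop_sorted b Ps; rewrite (drop_nth x0).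
Qed.
Ltac tl := change (@size (Equality.sort (fintype_Finite__to__eqtype_Equality T)) P) with (@size (Finite.sort T) P) in *; lia.
Ltac swt h := rewrite h; [rewrite /Sw; tl | tl].

Lemma U1 r r' j j' : r \notin P -> r' \notin P -> r != r' -> t = (2*d).+2 ->
  (forall i, i < t -> e r (q i) = Sw d j i) -> (forall i, i < t -> e r' (q i) = Sw d j' i) ->
  j.+2 <= j' -> j' <= d -> False.
Proof.
move=> rP r'P rr ht hr hr' hj hj'.
have hP : P = take (2*j+2) P ++ sl (2*j+2) (2*j') ++ drop (2*j') P.
  by rewrite -(drop_sl Ps) ?cat_take_drop //; lia.
apply: (grow2 (L := take (2*j+2) P ++ r' :: rev (sl (2*j+2) (2*j')) ++ r :: drop (2*j') P) rP r'P rr).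
  rewrite [X in perm_eq _ (_ :: _ :: X)]hP.
  apply/permP => z; rewrite /= !count_cat /= !count_cat /= count_rev; lia.
have hsl : 2*j+2 < 2*j' <= t by lia.
apply: (sorted_join esym).
- apply: (sorted_rcons_take (x0 := x0) Ps); first tl.
  right; rewrite esym; swt hr'.
- exact: sl_sorted.
- exact: (sl_nil Ps hsl).
- rewrite (sl_last x0 Ps _ hsl); swt hr'.
- rewrite (sl_head x0 Ps _ hsl) esym; swt hr.
- apply: (path_drop (x0 := x0) Ps); first tl.
  right; swt hr.
Qed.
Lemma U2 r r' j : r \notin P -> r' \notin P -> r != r' -> t = (2*d).+2 -> k = (2*d).+3 ->
  (forall i, i < t -> e r (q i) = Sw d j i) -> (forall i, i < t -> e r' (q i) = Sw d j.+1 i) ->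
  j.+2 <= d -> False.
Proof.
move=> rP r'P rr ht hkk hr hr' hj.
pose M := take (2*j+2) P ++ sl (2*j+2) (2*j+4) ++ sl (2*j+4) (2*d+1).
have hP : perm_eq P (M ++ drop (2*d+1) P).
  rewrite /M -{1}(cat_take_drop (2*d+1) P) (take_sl Ps (a := 2*j+4)); last lia.
  by rewrite (take_sl Ps (a := 2*j+2) (b := 2*j+4)) -?catA //; lia.
pose L := take (2*j+2) P ++ r' :: rev (sl (2*j+4) (2*d+1)) ++ r :: sl (2*j+2) (2*j+4).
apply: (kcontra (L := L) rP r'P rr _ hP).
- apply/permP => z; rewrite /L /M /= !count_cat /= !count_cat /= count_rev; lia.
- have hsl : 2*j+4 < 2*d+1 <= t by tl.
  apply: (sorted_join esym).
  + apply: (sorted_rcons_take (x0 := x0) Ps); first tl.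
    right; rewrite esym; swt hr'.
  + exact: sl_sorted.
  + exact: (sl_nil Ps hsl).
  + rewrite (sl_last x0 Ps _ hsl); swt hr'.
  + rewrite (sl_head x0 Ps _ hsl) esym; swt hr.
  + apply: (path_sl (x0 := x0) Ps); first tl.
    swt hr.
- rewrite /L !size_cat /= size_cat /= size_rev !(size_sl Ps) ?size_takel; tl.
Qed.

Lemma U3 r r' : r \notin P -> r' \notin P -> r != r' -> t = (2*d).+2 -> k = (2*d).+3 ->
  (forall i, i < t -> e r (q i) = Sw d d.-1 i) -> (forall i, i < t -> e r' (q i) = Sw d d i) ->
  1 < d -> False.
Proof.
move=> rP r'P rr ht hkk hr hr' hd.
pose M := take (2*d-4) P ++ sl (2*d-3) (2*d) ++ drop (2*d) P.
have hP : perm_eq P (M ++ [:: q (2*d-4)]).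
  have hP0 : P = take (2*d-4) P ++ q (2*d-4) :: sl (2*d-3) (2*d) ++ drop (2*d) P.
    rewrite -(drop_sl Ps); last lia.
    have -> : 2*d-3 = (2*d-4).+1 by lia.
    by rewrite -(drop_nth x0) ?cat_take_drop //; tl.
  rewrite [X in perm_eq X _]hP0.
  apply/permP => z; rewrite /M /= !count_cat /= !count_cat /=; lia.
pose L := take (2*d-4) P ++ r' :: rev (sl (2*d-3) (2*d)) ++ r :: drop (2*d) P.
apply: (kcontra (L := L) rP r'P rr _ hP).
- apply/permP => z; rewrite /L /M /= !count_cat /= !count_cat /= count_rev; lia.
- have hsl : 2*d-3 < 2*d <= t by tl.
  apply: (sorted_join esym).
  + apply: (sorted_rcons_take (x0 := x0) Ps); first tl.
    case: (ltnP d 3) => hd3; [left; lia | right; rewrite esym; swt hr'].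
  + exact: sl_sorted.
  + exact: (sl_nil Ps hsl).
  + rewrite (sl_last x0 Ps _ hsl); swt hr'.
  + rewrite (sl_head x0 Ps _ hsl) esym; swt hr.
  + apply: (path_drop (x0 := x0) Ps); first tl.
    right; swt hr.
- rewrite /L !size_cat /= size_cat /= size_rev !(size_sl Ps) ?size_takel ?size_drop; tl.
Qed.
Lemma tbounds r0 : r0 \notin P ->
  (t = (2*d).+1 \/ (t = (2*d).+2 /\ k = (2*d).+3)) /\ forall r, r \notin P -> deg e r = d.
Proof.
move=> r0P.
have h1 := count_bound r0P; rewrite -deg_count // -divn2 in h1.
have h2 := Rdeg r0P.
have h3 := Pk Pu Ps.
rewrite leq_divRL // in h1.
have tp := tpos; have ht1 : 2*d < t by tl.
split; first by case: (hk) => hk0; [left; tl | case: (ltnP t (2*d).+2) => hh; [left; tl | right; split; tl]].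
move=> r rP; have := count_bound rP; rewrite -deg_count // -divn2 => h4.
rewrite leq_divRL // in h4.
have := Rdeg rP; case: (hk) => hk0; tl.
Qed.

Lemma diffj r1 r2 j1 j2 : r1 \notin P -> r2 \notin P -> t = (2*d).+2 -> k = (2*d).+3 ->
  (forall i, i < t -> e r1 (q i) = Sw d j1 i) -> (forall i, i < t -> e r2 (q i) = Sw d j2 i) ->
  j1 < j2 -> j2 <= d -> False.
Proof.
move=> r1P r2P ht hkk h1 h2 hj hj2.
have rr : r1 != r2.
  apply/eqP => er; subst r2.
  have := h1 (2*j2).-1 ltac:(tl); rewrite h2; last tl.
  rewrite /Sw => /eqP; apply/negP; apply/negP; tl.
case: (ltnP j1.+1 j2) => hj'.
  exact: (U1 r1P r2P rr ht h1 h2 hj' hj2).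
have ej : j2 = j1.+1 by lia.
subst j2.
case: (ltnP j1.+1 d) => hd.
  exact: (U2 r1P r2P rr ht hkk h1 h2 hd).
have ej : j1 = d.-1 by lia.
have dd : deg e r1 = d by have [_ ] := tbounds r1P; apply.
have := mindeg r1; rewrite dd => d1.
have ej' : j1.+1 = d by lia.
rewrite ej in h1; rewrite ej' in h2.
exact: (U3 r1P r2P rr ht hkk h1 h2 d1).
Qed.
Lemma uniform r0 : r0 \notin P -> exists j, [/\ j <= d,
  (t = (2*d).+1 /\ j = d \/ t = (2*d).+2 /\ k = (2*d).+3) &
  forall r, r \notin P -> forall i, i < t -> e r (q i) = Sw d j i].
Proof.
move=> r0P; have [ht _] := tbounds r0P.
have ht' : t = (2*d).+1 \/ t = (2*d).+2 by case: ht => [|[]]; auto.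
have [j [hj hjd hs]] := sw_spec r0P ht'.
exists j; split => //.
  by case: ht => [h|h]; [left; split => //; apply: hjd | right].
move=> r rP; have [j' [hj' hjd' hs']] := sw_spec rP ht'.
suff -> : j = j' by [].
case: ht => [h|[h hkk]]; first by rewrite hjd // hjd'.
case: (ltngtP j j') => // hjj.
- by case: (diffj r0P rP h hkk hs hs' hjj hj').
- by case: (diffj rP r0P h hkk hs' hs hjj hj).
Qed.

Lemma ordered_edge r0 j a b : r0 \notin P -> j <= d ->
  (t = (2*d).+1 /\ j = d \/ t = (2*d).+2) ->
  (forall i, i < t -> e r0 (q i) = Sw d j i) ->
  a < b -> b < t -> e (q a) (q b) -> ~~ Sw d j a -> ~~ Sw d j b -> a = 2*j /\ b = (2*j).+1.
Proof.
move=> r0P hj ht hs hab hbt eab na nb.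
case: (boolP ((a == 2*j) && (b == (2*j).+1))) => [/andP[/eqP -> /eqP ->] //|hn].
have hn' : ~ (a = 2*j /\ b = (2*j).+1) by move=> [h1 h2]; move: hn; rewrite h1 h2 !eqxx.
have := edge_arith ht hj hab hbt na nb hn'.
case=> [[h1 h2]|[h1 h2]]; exfalso.
- apply: (edgeR r0P hab hbt eab); first by rewrite hs //; tl.
  by case: h2 => h2; [left | right; rewrite hs //; move: h2; rewrite /Sw; tl].
- apply: (edgeL r0P hab hbt eab); last by rewrite hs //; tl.
  by case: h1 => h1; [left | right; rewrite hs //; tl].
Qed.
Lemma nonS r0 j : r0 \notin P -> j <= d ->
  (t = (2*d).+1 /\ j = d \/ t = (2*d).+2) ->
  (forall r, r \notin P -> forall i, i < t -> e r (q i) = Sw d j i) ->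
  forall x y, ~~ e r0 x -> ~~ e r0 y -> e x y ->
  (2*j).+1 < t /\ (x = q (2*j) /\ y = q (2*j).+1 \/ x = q (2*j).+1 /\ y = q (2*j)).
Proof.
move=> r0P hj ht hs x y nx ny exy.
have memS : forall r u, r \notin P -> u \in P -> e r u = Sw d j (index u P).
  by move=> r u rP uP; rewrite -{1}(nth_index x0 uP) hs // index_mem.
case xP: (x \in P); last first.
  have yP := Rdom (negbT xP) exy.
  by move: ny; rewrite (memS _ _ r0P yP) -(memS _ _ (negbT xP) yP) exy.
case yP: (y \in P); last first.
  have eyx : e y x by rewrite esym.
  by move: nx; rewrite (memS _ _ r0P xP) -(memS _ _ (negbT yP) xP) eyx.
rewrite (memS _ _ r0P xP) in nx; rewrite (memS _ _ r0P yP) in ny.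
have ha := index_mem x P; have hb := index_mem y P.
rewrite xP in ha; rewrite yP in hb.
case: (ltngtP (index x P) (index y P)) => hab.
- have := ordered_edge r0P hj ht (hs r0 r0P) hab hb.
  rewrite !nth_index // => /(_ exy nx ny) [h1 h2].
  split; first by move: hb; rewrite h2.
  by left; rewrite -h2 -h1 !nth_index.
- have eyx : e y x by rewrite esym.
  have := ordered_edge r0P hj ht (hs r0 r0P) hab ha.
  rewrite !nth_index // => /(_ eyx ny nx) [h1 h2].
  split; first by move: ha; rewrite h2.
  by right; rewrite -h2 -h1 !nth_index.
- have exx : x = y by rewrite -(nth_index x0 xP) hab nth_index.
  by subst y; rewrite eirr in exy.
Qed.
End Main.

Section Graph.
Variables (T : finType) (e : rel T).
Hypotheses (esym : symmetric e) (eirr : irreflexive e).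

Lemma sorted_nth (x0 : T) p i : sorted e p -> i.+1 < size p -> e (nth x0 p i) (nth x0 p i.+1).
Proof.
case: p => // x s /= /(pathP x0) h hi.
by have := h i hi.
Qed.

Lemma gpath_Pfree (x0 : T) k p : uniq p -> sorted e p -> P_free k e -> size p < k.
Proof.
move=> pu ps Pf; rewrite ltnNge; apply/negP => hk; apply: Pf.
exists (fun i : 'I_k => nth x0 p i); split.
  move=> i j /eqP; rewrite nth_uniq //; [by move/eqP/val_inj | |];
  by apply: leq_trans hk; rewrite ltn_ord.
move=> i j; rewrite /path_graph => /orP[] /eqP h.
  by rewrite -h; apply: sorted_nth => //; rewrite h; apply: leq_trans hk.
by rewrite esym -h; apply: sorted_nth => //; rewrite h; apply: leq_trans hk.
Qed.

Lemma Kfree_H m d (s : 'I_d -> T) r : injective s -> (forall i, e r (s i)) ->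
  K_free m e -> K_free m.-1 (fun i j => e (s i) (s j)).
Proof.
move=> sinj hr Kf [g [ginj gE]]; apply: Kf.
case: m g ginj gE => [|m] g ginj gE.
  by exists (fun _ => r); split; move=> [].
pose h (i : 'I_m.+1) := if unlift ord_max i is Some i' then s (g i') else r.
exists h; split.
  move=> i j; rewrite /h; case: unliftP => [i' ->|->]; case: unliftP => [j' ->|->] //.
  - by move/sinj/ginj => ->.
  - by move=> hh; have := hr (g i'); rewrite -hh eirr.
  - by move=> hh; have := hr (g j'); rewrite hh eirr.
move=> i j; rewrite /complete_graph /h; case: unliftP => [i' ->|->]; case: unliftP => [j' ->|->] //.
- by move=> hij; apply: gE; rewrite /complete_graph; apply: contraNneq hij => ->.
- by move=> _; rewrite esym.
- by rewrite eqxx.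
Qed.

Lemma embed_even d n (S : {set T}) (s : 'I_d -> T) : injective s -> (forall i, s i \in S) ->
  #|S| = d -> #|T| = n -> (forall x y, x \notin S -> y \notin S -> ~~ e x y) ->
  subgraph e (gjoin (fun i j => e (s i) (s j)) (@empty_graph (n - d))).
Proof.
move=> sinj sS hS hT hE.
have hc : n - d = #|~: S| by rewrite cardsCs setCK hS hT; have := cardsCs S; lia.
pose g (z : ('I_d + 'I_(n - d))%type) := match z with inl i => s i | inr i => enum_val (cast_ord hc i) end.
have ginj : injective g.
  move=> [i|i] [j|j] /=.
  - by move/sinj ->.
  - by move=> hh; have := enum_valP (cast_ord hc j); rewrite -hh inE sS.
  - by move=> hh; have := enum_valP (cast_ord hc i); rewrite hh inE sS.
  - by move/enum_val_inj/(congr1 val) => /= hh; congr inr; apply: val_inj.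
have [f gK fK] : bijective g.
  apply: (@inj_card_bij _ T g ginj); rewrite card_sum !card_ord; have := subset_leq_card (subset_predT S); lia.
exists f; split; first exact: can_inj fK.
move=> x y; rewrite -{1}(fK x) -{1}(fK y).
case: (f x) => [i|i]; case: (f y) => [j|j] //=.
set a := enum_val _; set b := enum_val _.
have : a \in ~: S by apply: enum_valP.
have : b \in ~: S by apply: enum_valP.
rewrite !inE => hb ha; by rewrite (negbTE (hE _ _ ha hb)).
Qed.

Lemma embed_odd d n (S : {set T}) (s : 'I_d -> T) u v : injective s -> (forall i, s i \in S) ->
  #|S| = d -> #|T| = n -> u != v -> u \notin S -> v \notin S ->
  (forall x y, x \notin S -> y \notin S -> e x y -> ((x == u) && (y == v)) || ((x == v) && (y == u))) ->
  subgraph e (gjoin (fun i j => e (s i) (s j)) (gunion (@empty_graph (n - d - 2)) (@complete_graph 2))).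
Proof.
move=> sinj sS hS hT uv uS vS hE.
pose D := ~: S :\ u :\ v.
have hc : n - d - 2 = #|D|.
  have h1 := cardsC S; have h2 := cardsD1 u (~: S); have h3 := cardsD1 v (~: S :\ u).
  rewrite !inE uS vS eq_sym uv /= in h2 h3; rewrite /D; lia.
have memD : forall x, (x \in D) = [&& x != v, x != u & x \notin S] by move=> x; rewrite !inE.
pose g (z : ('I_d + ('I_(n - d - 2) + 'I_2))%type) := match z with
  | inl i => s i
  | inr (inl i) => enum_val (cast_ord hc i)
  | inr (inr i) => if i == ord0 then u else v end.
have gD : forall i, g (inr (inl i)) \in D by move=> i; apply: enum_valP.
have g2 : forall i, (g (inr (inr i)) == u) || (g (inr (inr i)) == v).
  by move=> i /=; case: (i == ord0); rewrite eqxx ?orbT.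
have g2S : forall i, g (inr (inr i)) \notin S by move=> i /=; case: (i == ord0).
have ginj : injective g.
  have D2 : forall i j, g (inr (inl i)) != g (inr (inr j)).
    move=> i j; apply/eqP => hh; have := gD i; rewrite hh memD.
    by case/orP: (g2 j) => /eqP ->; rewrite eqxx ?andbF.
  move=> [i|[i|i]] [j|[j|j]] //.
  - by move/sinj ->.
  - by move=> hh; have := gD j; rewrite -hh memD sS !andbF.
  - by move=> hh; have := g2S j; rewrite -hh sS.
  - by move=> hh; have := gD i; rewrite hh memD sS !andbF.
  - by move/enum_val_inj/(congr1 val) => /= hh; congr (inr (inl _)); apply: val_inj.
  - by move=> hh; have := D2 i j; rewrite hh eqxx.
  - by move=> hh; have := g2S i; rewrite hh sS.
  - by move=> hh; have := D2 j i; rewrite hh eqxx.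
  - move=> /=; case: (i =P ord0) => hi; case: (j =P ord0) => hj hh.
    + by rewrite hi hj.
    + by move/eqP: uv; rewrite hh.
    + by move/eqP: uv; rewrite hh.
    + have o2 : forall z : 'I_2, z <> ord0 -> z = ord_max.
        by case=> [[|[|z]] hz] h //; [case: h; apply: val_inj | apply: val_inj].
      by rewrite (o2 _ hi) (o2 _ hj).
have [f gK fK] : bijective g.
  apply: (@inj_card_bij _ T g ginj); rewrite !card_sum !card_ord.
  have := subset_leq_card (subset_predT S); have := cardsC S.
  have h2 := cardsD1 u (~: S); have h3 := cardsD1 v (~: S :\ u).
  rewrite !inE uS vS eq_sym uv /= in h2 h3; lia.
exists f; split; first exact: can_inj fK.
move=> x y; rewrite -{1}(fK x) -{1}(fK y).
case: (f x) => [i|[i|i]]; case: (f y) => [j|[j|j]] //=.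
- move=> exy; have := gD i; have := gD j; rewrite !memD => /and3P[hj1 hj2 hj3] /and3P[hi1 hi2 hi3].
  by move: (hE _ _ hi3 hj3 exy); rewrite (negbTE hi1) (negbTE hi2).
- move=> exy; have := gD i; rewrite memD => /and3P[hi1 hi2 hi3].
  by move: (hE _ _ hi3 (g2S j) exy); rewrite (negbTE hi1) (negbTE hi2).
- move=> exy; have := gD j; rewrite memD => /and3P[hj1 hj2 hj3].
  by move: (hE _ _ (g2S i) hj3 exy); rewrite (negbTE hj1) (negbTE hj2) !andbF.
- rewrite /complete_graph => exy; apply/eqP => hij; subst j.
  by rewrite eirr in exy.
Qed.

Lemma mindeg2 : two_connected e -> forall v, 1 < deg e v.
Proof.
move=> [h3 [_ h2c]] v; rewrite ltnNge /deg; apply/negP => hdeg.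
have [u [uv hu]] : exists u, u != v /\ forall x, e v x -> x = u.
  case: (set_0Vmem [set x | e v x]) => [N0|[u uN]].
    have : [set~ v] != set0.
      by rewrite -card_gt0 cardsC1; lia.
    case/set0Pn => u; rewrite !inE => uv; exists u; split => // x exv.
    have : x \in [set x | e v x] by rewrite inE.
    by rewrite N0 inE.
  exists u; split.
    by rewrite inE in uN; apply: contraTneq uN => ->; rewrite eirr.
  move=> x exv; move/card_le1_eqP: hdeg; apply => //; by rewrite inE.
have : [set~ u] :\ v != set0.
  rewrite -card_gt0; have := cardsD1 v [set~ u]; rewrite cardsC1 !inE eq_sym uv; lia.
case/set0Pn => w; rewrite !inE => /andP[wv wu].
have vu : v != u by rewrite eq_sym.
have := h2c u v w vu wu.
case/connectP => p hp wl.
case: p hp wl => [|y p] /=; first by move=> _ hw; move: wv; rewrite hw eqxx.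
by case/andP => /andP[/andP[hy _] yu] _ _; move: yu; rewrite (hu _ hy) eqxx.
Qed.

End Graph.

Lemma exists_max (A : Type) (good : A -> Prop) (sz : A -> nat) N a0 :
  good a0 -> (forall a, good a -> sz a <= N) ->
  exists a, good a /\ forall b, good b -> sz b <= sz a.
Proof.
move=> g0 hN.
have : N - sz a0 <= N - sz a0 by [].
move: {2}(N - sz a0) => m; elim: m a0 g0 => [|m IH] a0 g0 hm.
  exists a0; split => // b gb; have := hN b gb; have := hN a0 g0; lia.
case: (classic (exists b, good b /\ sz a0 < sz b)) => [[b [gb hb]]|hno].
  apply: (IH b gb); have := hN b gb; lia.
exists a0; split => // b gb; rewrite leqNgt; apply/negP => hb; apply: hno; by exists b.
Qed.

Lemma gpathE (T : finType) (e : rel T) p : is_gpath e p = (p != [::]) && uniq p && sorted e p.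
Proof. by case: p. Qed.

Theorem lemma3p2 (k m n : nat) (T : finType) (e : rel T) :
  simple_graph e -> two_connected e ->
  P_free k e -> K_free m e ->
  #|T| = n -> k <= n ->
  (exists p : seq T, strong_dominating_path e p /\
     forall u, u \notin p -> delta k <= deg e u) ->
  exists H : rel 'I_(delta k),
    simple_graph H /\ K_free m.-1 H /\
    (if ~~ odd k
     then subgraph e (gjoin H (@empty_graph (n - delta k)))
     else subgraph e (gjoin H (gunion (@empty_graph (n - delta k - 2))
                                        (@complete_graph 2)))).
Proof.
move=> [esym eirr] h2c Pf Kf hn hkn [P0 [[P0g P0dom] P0deg]].
have mind := mindeg2 eirr h2c.
have [x0 _] : exists x0 : T, True by case: (P0) P0g => // x0; exists x0.
have k2 : 1 < k by apply: (gpath_Pfree esym x0 (p := [:: x0])).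
set d := delta k.
have hk : k = (2*d).+2 \/ k = (2*d).+3.
  rewrite /d /delta; have := odd_double_half k; move: (k./2) => x; rewrite -muln2.
  case: (odd k) => /= h; lia.
pose good q := is_gpath e q && all (mem q) P0.
have [P [gP Pmax0]] : exists P, good P /\ forall q, good q -> size q <= size P.
  apply: (exists_max (N := #|T|) (a0 := P0)).
    by rewrite /good P0g; apply/allP.
  move=> q; rewrite /good gpathE => /andP[/andP[/andP[_ qu] _] _].
  by rewrite -(card_uniqP qu); apply: max_card.
move: gP; rewrite /good gpathE => /andP[/andP[/andP[Pn Pu] Ps] /allP P0P].
have Pmax : forall L, uniq L -> sorted e L -> {subset P <= L} -> size L <= size P.
  move=> L Lu Ls sub; apply: Pmax0; rewrite /good gpathE Lu Ls andbT /=.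
  apply/andP; split; last by apply/allP => z /P0P /sub.
  by case: (P) Pn sub => // z s _ /(_ z); case: (L) => //; rewrite inE eqxx => /(_ isT).
have Pk : forall L, uniq L -> sorted e L -> size L < k.
  by move=> L Lu Ls; apply: (gpath_Pfree esym x0).
have Rdom : forall v, v \notin P -> forall u, e v u -> u \in P.
  move=> v vP u evu; apply: (P0P); apply: (P0dom v) => //.
  by apply: contra vP => /P0P.
have Rdeg : forall v, v \notin P -> d <= deg e v.
  by move=> v vP; apply: P0deg; apply: contra vP => /P0P.
have [r0 r0P] : exists r0, r0 \notin P.
  case: (boolP [forall x, x \in P]) => [/forallP hall|].
    have := Pk P Pu Ps; rewrite -(card_uniqP Pu).
    have : #|T| <= #|P| by apply: subset_leq_card; apply/subsetP => z _; apply: hall.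
    lia.
  by rewrite negb_forall => /existsP.
have [j [hj ht hs]] := uniform esym x0 Pu Ps Pn Pmax Pk Rdom Rdeg mind hk r0P.
have [_ hdeg] := tbounds esym x0 Pu Ps Pn Pmax Pk Rdom Rdeg hk r0P.
set S := [set u | e r0 u].
have hS : #|S| = d by rewrite -(hdeg r0 r0P).
have [s [sinj sS]] : exists s : 'I_d -> T, injective s /\ forall i, s i \in S.
  exists (fun i => enum_val (cast_ord (sym_eq hS) i)); split; last by move=> i; apply: enum_valP.
  by move=> i i' /enum_val_inj /cast_ord_inj.
exists (fun i j => e (s i) (s j)); split.
  by split => [i i' | i] /=; [exact: esym | exact: eirr].
split.
  by apply: (Kfree_H esym eirr (r := r0) sinj _ Kf) => i; have := sS i; rewrite inE.
have ht' : size P = (2*d).+1 /\ j = d \/ size P = (2*d).+2 by case: ht => [|[]]; auto.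
have NS := nonS esym eirr Pu Ps Pn Pmax Rdom hk r0P hj ht' hs.
have hkd : k <= n by [].
case: ifP => hodd.
  have hk2 : k = (2*d).+2 by case: hk => // hk3; move: hodd; rewrite hk3 /= oddM.
  apply: (embed_even sinj sS hS hn) => x y xS yS; apply/negP => exy.
  rewrite !inE in xS yS.
  have [hlt _] := NS x y xS yS exy.
  case: ht => [[h1 h2]|[h1 h2]]; [clear -hlt h1 h2; lia | clear -hk2 h2; lia].
have hk3 : k = (2*d).+3 by case: hk => // hk2; move: hodd; rewrite hk2 /= oddM.
case: ht => [[h1 h2]|[h1 h2]].
  have : 1 < #|~: S| by have := cardsC S; lia.
  case/card_gt1P => u [v [uS vS uv]]; rewrite !inE in uS vS.
  apply: (embed_odd eirr sinj sS hS hn uv); rewrite ?inE // => x y xS yS exy.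
  rewrite !inE in xS yS; have [hlt _] := NS x y xS yS exy; clear -hlt h1 h2; lia.
have hjt : (2*j).+1 < size P by clear -h1 hj; lia.
have h2j : 2*j < size P by clear -hjt; lia.
have uv : nth x0 P (2*j) != nth x0 P (2*j).+1.
  by rewrite (nth_uniq x0 h2j hjt Pu) neq_ltn ltnSn.
have nS : forall i, i < size P -> ~~ Sw d j i -> nth x0 P i \notin S.
  by move=> i hi hw; rewrite inE hs.
apply: (embed_odd eirr sinj sS hS hn uv).
- by apply: nS; [exact: h2j | exact: Sw_2j].
- by apply: nS; [exact: hjt | exact: Sw_2j1].
move=> x y xS yS exy; rewrite !inE in xS yS.
have [_ [[-> ->]|[-> ->]]] := NS x y xS yS exy; by rewrite !eqxx ?orbT.
Qed.
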